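(* Let $\bm\mu=(\mu_1,\dots,\mu_r)$ be finite positive Borel measures on the unit circle with infinite supports, fix the square-root branch as in the context, let $\bm n\in\mathbb N^r$ be $\phi$-normal for $\bm\mu$, $\tau\in\partial\mathbb D$, and let $X\not\equiv0$ be a $\tau$-invariant paraorthogonal function for $\bm n$. Suppose that for every $\varphi\in[0,2\pi)$, $\bm n$ is $\phi$-normal with respect to the system $\widehat{\bm\mu}$ given by $d\widehat\mu_j(e^{i\theta})=4\sin^2\frac{\theta-\varphi}{2}\,d\mu_j(e^{i\theta})$ $(=-e^{i\varphi}z^{-1}(z-e^{i\varphi})^2d\mu_j(z))$, $j=1,\dots,r$. Then every zero of the polynomial $z^{(|\bm n|+1)/2}X(z)$ on $\partial\mathbb D$ is simple.
   Context: $\partial\mathbb D=\{|z|=1\}$. Fix $t_0\in\mathbb R$ and let $z^{k/2}=|z|^{k/2}\exp(ik\arg_{[t_0,t_0+2\pi)}(z)/2)$, $k\in\mathbb Z$. $|\bm n|=\sum_j n_j$; $\operatorname{span}\{z^p\}_{p=a}^b$ ($b-a\in\mathbb Z$) is the span of $z^a,\dots,z^b$. For a system $\bm\nu$ of measures on $\partial\mathbb D$, $\bm n$ is $\phi$-normal w.r.t. $\bm\nu$ if there is a unique $\phi\in\operatorname{span}\{z^p\}_{p=-|\bm n|/2}^{|\bm n|/2}$ with coefficient of $z^{|\bm n|/2}$ equal to $1$ such that $\int\phi(z)z^{-p}\,d\nu_j(z)=0$ for $p=-n_j/2,\dots,n_j/2-1$, $j=1,\dots,r$. A $\tau$-invariant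 paraorthogonal function for $\bm n$ is any $X\in\operatorname{span}\{z^p\}_{p=-(|\bm n|+1)/2}^{(|\bm n|+1)/2}$ with $X(z)=\tau\overline{X(1/\bar z)}$ and $\int X(z)z^{-p}\,d\mu_j(z)=0$ for $p=-(n_j-1)/2,\dots,(n_j-1)/2$, $j=1,\dots,r$. $z^{(|\bm n|+1)/2}X(z)$ is a polynomial; zeros of $X$ mean zeros of this polynomial. *)

(* Defs.v *)
From HB Require Import structures.
From mathcomp Require Import all_boot all_order all_algebra.
From mathcomp Require Import all_classical all_reals all_analysis.
From mathcomp Require Import complex.

Set Implicit Arguments.
Unset Strict Implicit.
Unset Printing Implicit Defensive.

Import Order.TTheory GRing.Theory Num.Theory.
Import numFieldNormedType.Exports.

Local Open Scope classical_set_scope.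
Local Open Scope ring_scope.
Local Open Scope complex_scope.

Notation normc := ComplexField.Normc.normc.

Section Defs.
Variable R : realType.

Definition expiC (theta : R) : R[i] := cos theta +i* sin theta.

Definition argI (t0 : R) : set R := `[t0, t0 + 2 * pi[%classic.

(* arg_{[t0, t0 + 2 pi)} z : the unique theta in [t0, t0+2pi) with
   z = |z| e^{i theta}  (for z <> 0; junk value t0 for z = 0). *)
Definition argb (t0 : R) (z : R[i]) : R :=
  xget t0 [set theta | argI t0 theta /\ z = (normc z)%:C * expiC theta].

(* z^{m/2} = |z|^{m/2} exp(i m arg_{[t0,t0+2pi)}(z) / 2), m : int *)
Definition hpow (t0 : R) (m : int) (z : R[i]) : R[i] :=
  ((Num.sqrt (normc z)) ^ m)%:C * expiC (m%:~R * argb t0 z / 2).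

(* the element sum_{k=0}^{M} c_k z^{(2k - M)/2} of span{z^p}_{p=-M/2}^{M/2} *)
Definition spanfun (t0 : R) (M : nat) (c : 'I_M.+1 -> R[i]) (z : R[i]) : R[i] :=
  \sum_(k < M.+1) c k * hpow t0 ((2 * k)%:Z - M%:Z) z.

Definition cint (mu : {measure set R -> \bar R}) (D : set R) (f : R -> R[i])
  : R[i] :=
  (Rintegral mu D (fun x => complex.Re (f x))) +i* (Rintegral mu D (fun x => complex.Im (f x))).

(* A measure on the unit circle is represented by a measure on the angle
   line R concentrated on the branch interval [t0, t0+2pi) (via
   theta |-> e^{i theta}); integrals over the circle are integrals over
   [t0, t0+2pi) of the integrand evaluated at e^{i theta}. *)
Definition circ_integral (t0 : R) (mu : {measure set R -> \bar R})
  (f : R[i] -> R[i]) : R[i] :=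
  cint mu (argI t0) (fun theta => f (expiC theta)).

Definition circle_measure (t0 : R) (mu : {measure set R -> \bar R}) : Prop :=
  mu (~` argI t0) = 0%E.

Definition finite_meas (mu : {measure set R -> \bar R}) : Prop :=
  (mu setT < +oo)%E.

Definition infinite_support (t0 : R) (mu : {measure set R -> \bar R}) : Prop :=
  forall F : set R, finite_set F -> (0 < mu (argI t0 `\` F))%E.

Definition totn (r : nat) (n : 'I_r -> nat) : nat := (\sum_(j < r) n j)%N.

(* phi satisfies the orthogonality conditions for n w.r.t. nu:
   int phi(z) z^{-p} dnu_j = 0 for p = -n_j/2, ..., n_j/2 - 1,
   i.e. p = (2l - n_j)/2, l = 0..n_j-1, so -p = (n_j - 2l)/2. *)
Definition phi_conditions (t0 : R) (r : nat) (nu : 'I_r -> {measure set R -> \bar R})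
  (n : 'I_r -> nat) (c : 'I_(totn n).+1 -> R[i]) : Prop :=
  c ord_max = 1 /\
  forall (j : 'I_r) (l : 'I_(n j)),
    circ_integral t0 (nu j)
      (fun z => spanfun t0 c z * hpow t0 ((n j)%:Z - (2 * l)%:Z) z) = 0.

Definition phi_normal (t0 : R) (r : nat) (nu : 'I_r -> {measure set R -> \bar R})
  (n : 'I_r -> nat) : Prop :=
  exists c, @phi_conditions t0 r nu n c /\
    forall c', @phi_conditions t0 r nu n c' -> forall k, c' k = c k.

(* d are the coefficients of X = sum_{k=0}^{|n|+1} d_k z^{(2k-|n|-1)/2}, a
   tau-invariant paraorthogonal function for n w.r.t. mu:
   orthogonality for p = -(n_j-1)/2, ..., (n_j-1)/2, i.e.
   p = (2l - n_j + 1)/2, l = 0..n_j-1, so -p = (n_j - 1 - 2l)/2. *)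
Definition paraorthogonal (t0 : R) (r : nat) (mu : 'I_r -> {measure set R -> \bar R})
  (n : 'I_r -> nat) (tau : R[i]) (d : 'I_(totn n).+2 -> R[i]) : Prop :=
  (forall z : R[i], z != 0 ->
     spanfun t0 d z = tau * conjc (spanfun t0 d (1 / conjc z))) /\
  forall (j : 'I_r) (l : 'I_(n j)),
    circ_integral t0 (mu j)
      (fun z => spanfun t0 d z * hpow t0 ((n j)%:Z - 1 - (2 * l)%:Z) z) = 0.

(* z^{(|n|+1)/2} X(z) = sum_k d_k z^k *)
Definition Xpoly (M : nat) (d : 'I_M.+2 -> R[i]) : {poly R[i]} :=
  \poly_(k < M.+2) d (inord k).

Definition hatw (varphi theta : R) : R := 4 * (sin ((theta - varphi) / 2)) ^+ 2.

End Defs.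

Arguments phi_conditions {R} t0 {r} nu n c.
Arguments paraorthogonal {R} t0 {r} mu n tau d.

(* Main.v *)
Require Import Defs.
From HB Require Import structures.
From mathcomp Require Import all_boot all_order all_algebra.
From mathcomp Require Import all_classical all_reals all_analysis.
From mathcomp Require Import complex measurable_realfun.
From mathcomp Require Import ring lra.
Set Implicit Arguments.
Unset Strict Implicit.
Unset Printing Implicit Defensive.
Import Order.TTheory GRing.Theory Num.Theory.
Import numFieldNormedType.Exports.
Local Open Scope classical_set_scope.
Local Open Scope ring_scope.
Local Open Scope complex_scope.

Section dens.
Context d (T : measurableType d) (R : realType).
Variables (nu mu : {measure set T -> \bar R}) (g : T -> \bar R).
Hypothesis g0 : forall x, (0 <= g x)%E.
Hypothesis gfin : forall x, g x \is a fin_num.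
Hypothesis mg : measurable_fun setT g.
Hypothesis gint : forall A, measurable A -> nu A = (\int[mu]_(x in A) g x)%E.
Local Open Scope ereal_scope.
Import HBNNSimple.

Lemma dens_ge0 f E : (forall x, 0 <= f x) ->
    measurable E -> measurable_fun E f ->
  \int[mu]_(x in E) (f x * g x) = \int[nu]_(x in E) f x.
Proof.
move=> f0 mE mf.
pose h := nnsfun_approx mE mf.
have -> : \int[nu]_(x in E) f x =
    lim (\int[nu]_(x in E) (EFin \o h n) x @[n --> \oo]).
  have fE x : E x -> f x = lim ((EFin \o h n) x @[n --> \oo]).
    by move=> Ex; apply/esym/cvg_lim => //; exact: cvg_nnsfun_approx.
  under eq_integral => x /[!inE] /fE -> //.
  apply: monotone_convergence => //.
  - move=> n; apply/measurable_EFinP.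
    by apply: (measurable_funS measurableT) => //; exact/measurable_funP.
  - by move=> n x Ex //=; rewrite lee_fin.
  - by move=> x Ex a b ab; rewrite lee_fin; exact/lefP/nd_nnsfun_approx.
have -> : \int[mu]_(x in E) (f \* g) x =
    lim (\int[mu]_(x in E) ((EFin \o h n) \* g) x @[n --> \oo]).
  have fg x : E x -> f x * g x = lim (((EFin \o h n) \* g) x @[n --> \oo]).
    by move=> Ex; apply/esym/cvg_lim => //; apply: cvgeZr;
      [exact: gfin|exact: cvg_nnsfun_approx].
  under eq_integral => x /[!inE] /fg -> //.
  apply: monotone_convergence => [//| | |].
  - move=> n; apply/emeasurable_funM; apply/measurable_funTS.
      exact/measurable_EFinP.
    exact: mg.
  - by move=> n x Ex /=; rewrite mule_ge0 ?lee_fin ?g0.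
  - by move=> x Ex a b ab/=; rewrite lee_wpmul2r ?lee_fin ?g0//; exact/lefP/nd_nnsfun_approx.
suff suf n : \int[mu]_(x in E) ((EFin \o h n) x * g x) =
    \int[nu]_(x in E) (EFin \o h n) x.
  by under eq_fun do rewrite suf.
transitivity (\int[nu]_(x in E)
   (\sum_(y \in range (h n)) (y * \1_(h n @^-1` [set y]) x)%:E)); last first.
  by apply: eq_integral => t tE; rewrite /= fimfunE -fsumEFin.
have indich m r : measurable_fun E (fun x => (r * \1_(h m @^-1` [set r]) x)%:E).
  by apply: (measurable_comp measurableT) => //; exact: measurable_funM.
rewrite ge0_integral_fsum//; last by move=> m y Ey; exact: nnfun_muleindic_ge0.
transitivity (\int[mu]_(x in E) (\sum_(y \in range (h n))
    (y * \1_(h n @^-1` [set y]) x)%:E * g x)).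
  under [RHS]eq_integral => x xE.
    rewrite -ge0_mule_fsuml => [|y]; last exact: nnfun_muleindic_ge0.
    rewrite fsumEFin // -(fimfunE _ x); over.
  by [].
rewrite ge0_integral_fsum//; last 2 first.
  - move=> y; apply: emeasurable_funM => //; apply: measurable_funTS.
    exact: mg.
  - by move=> m y Ey; rewrite mule_ge0 ?g0// nnfun_muleindic_ge0.
apply: eq_fsbigr => r rhn.
under [RHS]eq_integral do rewrite EFinM.
rewrite integralZl_indic_nnsfun => //.
under eq_integral do rewrite EFinM -muleA.
rewrite ge0_integralZl//.
- under eq_integral do rewrite muleC.
  rewrite (eq_integral (g \_ (h n @^-1` [set r]))); last first.
    by move=> x xE; rewrite epatch_indic.
  by rewrite -integral_mkcondr -gint// integral_indic// setIC.
- apply: emeasurable_funM; first exact/measurable_EFinP.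
  exact/measurable_funTS/mg.
- by move=> t Et; rewrite mule_ge0 ?lee_fin ?g0.
- by move: rhn; rewrite inE => -[t _ <-]; rewrite lee_fin.
Qed.

End dens.

Section dens_real.
Context d (T : measurableType d) (R : realType).
Variables (nu mu : {measure set T -> \bar R}) (h : T -> R).
Hypothesis h0 : forall x, 0 <= h x.
Hypothesis mh : measurable_fun setT h.
Hypothesis hint : forall A, measurable A -> nu A = (\int[mu]_(x in A) (h x)%:E)%E.

Lemma maxM0 (a b : R) : 0 <= b -> Num.max (a * b) 0 = Num.max a 0 * b.
Proof.
move=> b0; have [a0|a0] := leP 0 a.
    by rewrite !max_l // mulr_ge0.
have ab : a * b <= 0 by rewrite mulr_le0_ge0 // ltW.
by rewrite mul0r; apply/max_idPr.
Qed.

Lemma dens_real (f : T -> R) D : measurable D -> measurable_fun D f ->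
  (\int[nu]_(x in D) (f x)%:E = \int[mu]_(x in D) (f x * h x)%:E)%E.
Proof.
move=> mD mf.
have mg : measurable_fun setT (EFin \o h) by exact/measurable_EFinP.
have g0 : forall x, (0 <= (EFin \o h) x)%E by move=> x; rewrite /= lee_fin.
have gfin : forall x, (EFin \o h) x \is a fin_num by [].
rewrite integralE [RHS]integralE !funerpos !funerneg.
congr (_ - _)%E.
  rewrite -(dens_ge0 g0 gfin mg hint) //; last exact/measurable_EFinP/measurable_funrpos.
    apply: eq_integral => x _ /=; rewrite -EFinM /funrpos maxM0 //.
  by move=> x; rewrite /= lee_fin /funrpos le_max lexx orbT.
rewrite -(dens_ge0 g0 gfin mg hint) //; last exact/measurable_EFinP/measurable_funrneg.
  apply: eq_integral => x _ /=; rewrite -EFinM /funrneg -maxM0 // mulNr //.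
by move=> x; rewrite /= lee_fin /funrneg le_max lexx orbT.
Qed.
End dens_real.

Section trig.
Variable R : realType.
Implicit Types a b theta : R.

Lemma expiCD a b : expiC a * expiC b = expiC (a + b).
Proof.
rewrite /expiC /= cosD sinD; congr (_ +i* _); ring.
Qed.

Lemma expiC0 : expiC (0:R) = 1.
Proof. by rewrite /expiC cos0 sin0. Qed.

Lemma expiCX a (k : nat) : expiC a ^+ k = expiC (k%:R * a).
Proof.
elim: k => [|k IH]; first by rewrite expr0 mul0r expiC0.
by rewrite exprS IH expiCD mulrSr mulrDl mul1r addrC.
Qed.

Lemma normc_expiC a : normc (expiC a) = 1.
Proof. by rewrite /expiC /= (cos2Dsin2 a) sqrtr1. Qed.

Lemma mul_realC (x : R[i]) (r : R) : x * r%:C = (complex.Re x * r)%R +i* (complex.Im x * r)%R.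
Proof. by case: x => a b /=; congr (_ +i* _); ring. Qed.

End trig.

Section argb.
Variable R : realType.
Implicit Types a b theta : R.

Lemma cos_eq1_0 x : 0 <= x < 2 * pi -> cos x = 1 -> x = 0 :> R.
Proof.
move=> /andP[x0 x2] cx.
have hx : x = (x / 2) *+ 2 by rewrite mulr2n -splitr.
have cy : cos (x / 2) ^+ 2 = 1.
  have h := cx; rewrite hx cos_mulr2n -mulr_natr in h; lra.
have sy : sin (x / 2) = 0.
  by apply/eqP; rewrite -sqrf_eq0 sin2cos2 cy subrr.
have [/eqP->|xn0] := boolP (x == 0) => //.
have : 0 < sin (x / 2).
  apply: sin_gt0_pi; apply/andP; split.
    by rewrite divr_gt0 // lt0r xn0 x0.
  by rewrite ltr_pdivrMr // mulrC.
by rewrite sy ltxx.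
Qed.

Lemma expiC_inj t0 a b : argI t0 a -> argI t0 b -> expiC a = expiC b -> a = b.
Proof.
wlog ab : a b / b <= a.
  move=> H Ha Hb E; have [ba|ab] := leP b a; first exact: H.
  by apply/esym/H => //; exact: ltW.
rewrite /argI /= !in_itv /= => /andP[a1 a2] /andP[b1 b2] [ca sa].
suff : a - b = 0 by move/eqP; rewrite subr_eq0 => /eqP.
apply: cos_eq1_0.
  rewrite subr_ge0 ab /=.
  rewrite ltrBlDr; lra.
by rewrite cosB ca sa -expr2 -expr2 cos2Dsin2.
Qed.

Lemma argb_expiC t0 theta : argI t0 theta -> argb t0 (expiC theta) = theta.
Proof.
move=> hT; rewrite /argb.
set P := [set _ | _].
have Pt : P theta by split => //; rewrite normc_expiC mul1r.
have [h1 h2] := xgetI t0 Pt.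
rewrite normc_expiC mul1r in h2.
by apply: (expiC_inj h1 hT); rewrite -h2.
Qed.

Lemma hpow_expiC t0 (m : int) theta : argI t0 theta ->
  hpow t0 m (expiC theta) = expiC (m%:~R * theta / 2).
Proof.
move=> hT; rewrite /hpow argb_expiC // normc_expiC sqrtr1.
have -> : (1:R) ^ m = 1 by exact: exp1rz.
by rewrite mul1r.
Qed.
End argb.

Section argex.
Variable R : realType.

Lemma norm1_normc (z : R[i]) : `|z| = 1 -> normc z = 1.
Proof. by rewrite /Num.norm /= => -[]. Qed.

Lemma arg_exists (z : R[i]) : normc z = 1 ->
  exists phi : R, 0 <= phi < 2 * pi /\ expiC phi = z.
Proof.
case: z => a b /= h.
have hab : a ^+ 2 + b ^+ 2 = 1.
  by move: h => /(congr1 (fun t => t ^+ 2)); rewrite sqr_sqrtr ?expr1n // addr_ge0 // sqr_ge0.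
have a1 : -1 <= a <= 1.
  apply/andP; split; nra.
have sA : sin (acos a) = `|b|.
  rewrite sin_acos // -hab addrAC subrr add0r sqrtr_sqr //.
have pi0 : 0 < pi :> R by exact: pi_gt0.
have [b0|b0] := leP 0 b.
  exists (acos a); split.
    by rewrite acos_ge0 //= (le_lt_trans (acos_lepi a1)) // ltr_pMl // ltr1n.
  by rewrite /expiC acosK ?in_itv //= sA ger0_norm.
exists (2 * pi - acos a); split.
  have : 0 < acos a.
    apply: acos_gt0; case/andP: a1 => -> /= a1; rewrite lt_neqAle a1 andbT.
    apply/eqP => ea; move: hab; rewrite ea expr1n => hb.
    have : b ^+ 2 = 0 by lra.
    by move/eqP; rewrite sqrf_eq0 => /eqP bz; move: b0; rewrite bz ltxx.
  have := acos_lepi a1; lra.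
have -> : 2 * pi = pi *+ 2 :> R by rewrite mulr_natl.
rewrite /expiC cosB sinB cos2pi sin2pi acosK ?in_itv //= sA ltr0_norm //.
congr (_ +i* _); ring.
Qed.
End argex.

Section hatmu.
Variable R : realType.
Variables (mu : {measure set R -> \bar R}) (phi : R).

Lemma hatw_ge0 x : 0 <= hatw phi x.
Proof. by rewrite /hatw mulr_ge0 // sqr_ge0. Qed.

Lemma measurable_hatw : measurable_fun setT (hatw phi).
Proof.
rewrite /hatw; apply: measurable_funM => //.
apply: measurable_funX.
apply: measurableT_comp; first by apply: continuous_measurable_fun; exact: continuous_sin.
apply: measurable_funM => //.
exact: measurable_funB.
Qed.

Definition hatmu (A : set R) : \bar R := (\int[mu]_(x in A) (hatw phi x)%:E)%E.

Let hatmu0 : hatmu set0 = 0%E.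
Proof. by rewrite /hatmu integral_set0. Qed.

Let hatmu_ge0 A : (0 <= hatmu A)%E.
Proof. by apply: integral_ge0 => x _; rewrite lee_fin hatw_ge0. Qed.

Let hatmu_sigma : semi_sigma_additive hatmu.
Proof.
apply: (@semi_sigma_additive_nng_induced _ _ _ mu (fun x => (hatw phi x)%:E)).
  by apply/measurable_EFinP; exact: measurable_hatw.
by move=> x; have := hatw_ge0 x; rewrite -lee_fin; exact.
Qed.

HB.instance Definition _ := isMeasure.Build _ _ _ hatmu hatmu0 hatmu_ge0 hatmu_sigma.

Lemma hatmuE A : hatmu A = (\int[mu]_(x in A) (hatw phi x)%:E)%E.
Proof. by []. Qed.

Lemma hatmu_le (A : set R) : measurable A -> (hatmu A <= 4%:E * mu A)%E.
Proof.
move=> mA; rewrite /hatmu -integral_cst //.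
apply: ge0_le_integral => //.
- by move=> x _; rewrite lee_fin hatw_ge0.
- by apply/measurable_funTS/measurable_EFinP; exact: measurable_hatw.
move=> x _; rewrite /cst lee_fin /hatw.
have h1 := sin_le1 ((x - phi) / 2); have h2 := sin_geN1 ((x - phi) / 2).
set s := sin _ in h1 h2 *; nra.
Qed.
End hatmu.

Section tsum.
Variable R : realType.

Lemma bounded_of (A : set R) (f : R -> R) (B : R) :
  (forall x, A x -> `|f x| <= B) -> [bounded f x | x in A].
Proof.
move=> hB; exists B; split; first exact: num_real.
by move=> M BM x Ax; apply: le_trans (hB x Ax) (ltW BM).
Qed.

Definition tsum N (c : 'I_N -> R[i]) (e : 'I_N -> R) (t : R) : R[i] :=
  \sum_(k < N) c k * expiC (e k * t).

Lemma Re_sum I (s : seq I) (F : I -> R[i]) :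
  complex.Re (\sum_(i <- s) F i) = (\sum_(i <- s) complex.Re (F i))%R.
Proof.
elim: s => [|a s IH]; first by rewrite !big_nil.
by rewrite !big_cons -IH; case: (F a) => ? ?; case: (\sum_(i <- s) F i).
Qed.

Lemma Im_sum I (s : seq I) (F : I -> R[i]) :
  complex.Im (\sum_(i <- s) F i) = (\sum_(i <- s) complex.Im (F i))%R.
Proof.
elim: s => [|a s IH]; first by rewrite !big_nil.
by rewrite !big_cons -IH; case: (F a) => ? ?; case: (\sum_(i <- s) F i).
Qed.

Lemma Re_tsum N c e t : complex.Re (@tsum N c e t) =
  (\sum_(k < N) (complex.Re (c k) * cos (e k * t) - complex.Im (c k) * sin (e k * t)))%R.
Proof. by rewrite /tsum Re_sum; apply: eq_bigr => k _; case: (c k). Qed.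

Lemma Im_tsum N c e t : complex.Im (@tsum N c e t) =
  (\sum_(k < N) (complex.Re (c k) * sin (e k * t) + complex.Im (c k) * cos (e k * t)))%R.
Proof. by rewrite /tsum Im_sum; apply: eq_bigr => k _; case: (c k). Qed.

Lemma measurable_cosM (a : R) : measurable_fun setT (fun t : R => cos (a * t)).
Proof.
apply: measurableT_comp; first by apply: continuous_measurable_fun; exact: continuous_cos.
exact: measurable_funM.
Qed.

Lemma measurable_sinM (a : R) : measurable_fun setT (fun t : R => sin (a * t)).
Proof.
apply: measurableT_comp; first by apply: continuous_measurable_fun; exact: continuous_sin.
exact: measurable_funM.
Qed.

Lemma measurable_Re_tsum N c e (D : set R) :
  measurable_fun D (fun t => complex.Re (@tsum N c e t)).
Proof.
under eq_fun do rewrite Re_tsum.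
apply: measurable_sum => k; apply: measurable_funTS.
apply: measurable_funB; apply: measurable_funM => //.
  exact: measurable_cosM.
exact: measurable_sinM.
Qed.

Lemma measurable_Im_tsum N c e (D : set R) :
  measurable_fun D (fun t => complex.Im (@tsum N c e t)).
Proof.
under eq_fun do rewrite Im_tsum.
apply: measurable_sum => k; apply: measurable_funTS.
apply: measurable_funD; apply: measurable_funM => //.
  exact: measurable_sinM.
exact: measurable_cosM.
Qed.

Lemma bound_tsum N c e t :
  `|complex.Re (@tsum N c e t)| <= \sum_(k < N) (`|complex.Re (c k)| + `|complex.Im (c k)|) /\
  `|complex.Im (@tsum N c e t)| <= \sum_(k < N) (`|complex.Re (c k)| + `|complex.Im (c k)|).
Proof.
rewrite Re_tsum Im_tsum; split; apply: le_trans (ler_norm_sum _ _ _) _;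
  apply: ler_sum => k _.
  apply: le_trans (ler_normB _ _) _; rewrite !normrM.
  apply: lerD; rewrite -[X in _ <= X]mulr1; apply: ler_wpM2l => //.
    exact: cos_max.
  exact: sin_max.
apply: le_trans (ler_normD _ _) _; rewrite !normrM.
apply: lerD; rewrite -[X in _ <= X]mulr1; apply: ler_wpM2l => //.
  exact: sin_max.
exact: cos_max.
Qed.

Lemma integrable_Re_tsum (mu : {measure set R -> \bar R}) (D : set R) N c e :
  measurable D -> (mu D < +oo)%E ->
  mu.-integrable D (EFin \o (fun t => complex.Re (@tsum N c e t))).
Proof.
move=> mD muD; apply: measurable_bounded_integrable => //.
  exact: measurable_Re_tsum.
by apply: bounded_of => t _; exact: (bound_tsum c e t).1.
Qed.

Lemma integrable_Im_tsum (mu : {measure set R -> \bar R}) (D : set R) N c e :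
  measurable D -> (mu D < +oo)%E ->
  mu.-integrable D (EFin \o (fun t => complex.Im (@tsum N c e t))).
Proof.
move=> mD muD; apply: measurable_bounded_integrable => //.
  exact: measurable_Im_tsum.
by apply: bounded_of => t _; exact: (bound_tsum c e t).2.
Qed.

End tsum.

Section cintS.
Variable R : realType.
Implicit Types (mu : {measure set R -> \bar R}) (D : set R).

Lemma cint_eq mu D (F G : R -> R[i]) : {in D, F =1 G} -> cint mu D F = cint mu D G.
Proof.
move=> FG; rewrite /cint; congr (_ +i* _); apply: eq_Rintegral => x /FG ->//.
Qed.

Lemma cint_tsumD mu D N1 N2 c1 e1 c2 e2 : measurable D -> (mu D < +oo)%E ->
  cint mu D (fun t => @tsum R N1 c1 e1 t + @tsum R N2 c2 e2 t) =
  cint mu D (tsum c1 e1) + cint mu D (tsum c2 e2).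
Proof.
move=> mD muD; rewrite /cint.
have hRe t : complex.Re (tsum c1 e1 t + tsum c2 e2 t) =
    (complex.Re (tsum c1 e1 t) + complex.Re (tsum c2 e2 t))%R.
  by case: (tsum c1 e1 t); case: (tsum c2 e2 t).
have hIm t : complex.Im (tsum c1 e1 t + tsum c2 e2 t) =
    (complex.Im (tsum c1 e1 t) + complex.Im (tsum c2 e2 t))%R.
  by case: (tsum c1 e1 t); case: (tsum c2 e2 t).
under eq_Rintegral do rewrite hRe.
under [X in _ +i* X]eq_Rintegral do rewrite hIm.
rewrite RintegralD //; try exact: integrable_Re_tsum.
rewrite RintegralD //; try exact: integrable_Im_tsum.
Qed.

Lemma cint_dens mu (phi : R) D (F : R -> R[i]) : measurable D ->
  measurable_fun D (fun t => complex.Re (F t)) ->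
  measurable_fun D (fun t => complex.Im (F t)) ->
  cint (hatmu mu phi) D F = cint mu D (fun t => F t * (hatw phi t)%:C).
Proof.
move=> mD mRe mIm; rewrite /cint /Rintegral.
have hint A : measurable A -> hatmu mu phi A = (\int[mu]_(x in A) (hatw phi x)%:E)%E.
  by [].
rewrite (dens_real (@hatw_ge0 R phi) (measurable_hatw phi) hint mD mRe).
rewrite (dens_real (@hatw_ge0 R phi) (measurable_hatw phi) hint mD mIm).
by congr (fine _ +i* fine _); apply: eq_integral => x _; rewrite mul_realC.
Qed.

End cintS.

Section circle.
Variable R : realType.

Lemma spanfun_hpow (t0 : R) K (c : 'I_K.+1 -> R[i]) (m : int) (t : R) : argI t0 t ->
  spanfun t0 c (expiC t) * hpow t0 m (expiC t) =
  tsum c (fun k => (k : nat)%:R + (m - K%:Z)%:~R / 2) t.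
Proof.
move=> ht; rewrite /spanfun /tsum mulr_suml; apply: eq_bigr => k _.
rewrite hpow_expiC // hpow_expiC // -mulrA expiCD; congr (_ * expiC _).
rewrite !intrD !intrN -!pmulrn natrM.
by field.
Qed.

Lemma tsum_poly N (c : 'I_N -> R[i]) (b t : R) :
  tsum c (fun k => (k : nat)%:R + b) t = expiC (b * t) * \sum_(k < N) c k * expiC t ^+ k.
Proof.
rewrite /tsum mulr_sumr; apply: eq_bigr => k _.
by rewrite expiCX mulrCA expiCD mulrDl addrC.
Qed.

Lemma hatwC (phi t : R) : (hatw phi t)%:C = 2 - expiC (t - phi) - expiC (phi - t).
Proof.
have -> : phi - t = - (t - phi) by rewrite opprB.
set x := t - phi.
have hx : cos x = 1 - 2 * sin (x / 2) ^+ 2.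
  rewrite {1}(_ : x = (x / 2) *+ 2); last by rewrite mulr2n -splitr.
  rewrite cos_mulr2n cos2sin2; ring.
rewrite /hatw -/x /expiC cosN sinN.
apply/eqP; rewrite eq_complex /=; apply/andP; split; apply/eqP.
  rewrite hx; ring.
ring.
Qed.

Lemma hatw_key (phi t : R) :
  expiC t * (- expiC phi) * (hatw phi t)%:C = (expiC t - expiC phi) ^+ 2.
Proof.
rewrite hatwC.
set w := expiC (t - phi); set w' := expiC (phi - t).
have hu : expiC t = expiC phi * w by rewrite /w expiCD; congr expiC; ring.
have hw : w' * w = 1 by rewrite /w /w' expiCD -expiC0; congr expiC; ring.
rewrite hu; set v := expiC phi.
have -> : v * w * - v * (2 - w - w') = (v * w - v) ^+ 2 + v ^+ 2 * (w' * w - 1) by ring.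
by rewrite hw subrr mulr0 addr0.
Qed.
End circle.

From mathcomp Require Import zify.
Unset Implicit Arguments.
Set Strict Implicit.

Theorem theorem4p2 (R : realType) (t0 : R) (r : nat)
  (mu : 'I_r -> {measure set R -> \bar R}) (n : 'I_r -> nat)
  (tau : R[i]) (d : 'I_(totn n).+2 -> R[i]) :
  (forall j, finite_meas (mu j)) ->
  (forall j, circle_measure t0 (mu j)) ->
  (forall j, infinite_support t0 (mu j)) ->
  phi_normal t0 mu n ->
  `|tau| = 1 ->
  paraorthogonal t0 mu n tau d ->
  ~ (forall z : R[i], spanfun t0 d z = 0) ->
  (forall varphi : R, 0 <= varphi < 2 * pi ->
     forall nu : 'I_r -> {measure set R -> \bar R},
       (forall j (A : set R), measurable A ->
          nu j A = (\int[mu j]_(x in A) (hatw varphi x)%:E)%E) ->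
       phi_normal t0 nu n) ->
  forall z : R[i], `|z| = 1 -> root (Xpoly d) z -> mup z (Xpoly d) = 1%N.
Proof.
move=> mfin _ _ _ _ [_ orth] nz hyp z0 z1 rz.
set M := totn n in d orth nz rz *.
set P := Xpoly d.
have coefP (k : 'I_M.+2) : P`_k = d k.
  by rewrite /P /Xpoly coef_poly ltn_ord inord_val.
have P0 : P != 0.
  apply/negP => /eqP P0; apply: nz => z.
  rewrite /spanfun big1 // => k _.
  by rewrite -coefP P0 coef0 mul0r.
have hmup0 : (0 < mup z0 P)%N by rewrite -XsubC_dvd // dvdp_XsubCl.
apply/eqP; rewrite eqn_leq hmup0 andbT leqNgt; apply/negP => h2.
have : ('X - z0%:P) ^+ 2 %| P by rewrite -mup_geq.
case/dvdpP => q Pq.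
have q0 : q != 0 by apply: contra P0 => /eqP q0; rewrite Pq q0 mul0r.
have X0 : ('X - z0%:P) ^+ 2 != 0 by rewrite -size_poly_eq0 size_exp_XsubC.
have sq : (size q <= M)%N.
  have := size_poly M.+2 (fun k => d (inord k)).
  by rewrite -/(Xpoly d) -/P Pq size_mul // size_exp_XsubC addnS /= addn2 !ltnS.
have z00 : z0 != 0.
  apply/eqP => ez; move: (z1); rewrite ez normr0 => /eqP; by rewrite eq_sym oner_eq0.
have [phi [hphi ephi]] := arg_exists (norm1_normc z1).
pose nu j := hatmu (mu j) phi.
have hnu : forall j A, measurable A ->
    nu j A = (\int[mu j]_(x in A) (hatw phi x)%:E)%E by [].
have [c [[cmax Hc] cuniq]] := hyp phi hphi nu hnu.
pose cY (k : 'I_M.+1) := - z0 * q`_k.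
pose c' k := c k + cY k.
have mD : measurable (argI t0) by exact: measurable_itv.
have Hc' : phi_conditions t0 nu n c'.
  split.
    by rewrite /c' cmax /cY nth_default ?mulr0 ?addr0.
  move=> j l.
  pose m : int := (n j)%:Z - (2 * l)%:Z.
  pose b : R := (m - M%:Z)%:~R / 2.
  pose e := fun k : 'I_M.+1 => (k:nat)%:R + b.
  have nuD : (nu j (argI t0) < +oo)%E.
    apply: le_lt_trans (hatmu_le (mu j) phi mD) _.
    rewrite lte_mul_pinfty //.
    apply: le_lt_trans (mfin j).
    by apply: le_measure; rewrite ?inE.
  rewrite /circ_integral.
  rewrite (@cint_eq _ _ _ _ (fun t => tsum c e t + tsum cY e t)); last first.
    move=> t /set_mem ht /=; rewrite spanfun_hpow // /tsum -big_split /=.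
    by apply: eq_bigr => k _; rewrite /c' mulrDl.
  rewrite cint_tsumD //.
  have -> : cint (nu j) (argI t0) (tsum c e) = 0.
    rewrite -(Hc j l) /circ_integral; apply: cint_eq => t /set_mem ht /=.
    by rewrite spanfun_hpow.
  rewrite add0r cint_dens //; [|exact: measurable_Re_tsum | exact: measurable_Im_tsum].
  rewrite -(orth j l) /circ_integral; apply: cint_eq => t /set_mem ht /=.
  rewrite spanfun_hpow // !tsum_poly.
  set u := expiC t.
  have sumY : \sum_(k < M.+1) cY k * u ^+ k = - z0 * q.[u].
    rewrite (@horner_coef_wide _ M.+1) ?(leq_trans sq) // mulr_sumr.
    by apply: eq_bigr => k _; rewrite /cY mulrA.
  have sumd : \sum_(k < M.+2) d k * u ^+ k = P.[u].
    rewrite (@horner_coef_wide _ M.+2) ?size_poly //.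
    by apply: eq_bigr => k _; rewrite coefP.
  rewrite sumY sumd Pq hornerM horner_exp hornerXsubC.
  have eb : expiC (b * t) =
      expiC (((n j)%:Z - 1 - (2 * l)%:Z - (M.+1)%:Z)%:~R / 2 * t) * u.
    rewrite /u expiCD; congr expiC; rewrite /b /m !intrD !intrN -!pmulrn -addn1 natrD.
    by field.
  have hk := hatw_key phi t; rewrite -/u ephi in hk.
  by rewrite eb -hk; ring.
have hc := cuniq c' Hc'.
have qk : forall k, q`_k = 0.
  move=> k; case: (ltnP k M.+1) => hk.
    have := hc (Ordinal hk); rewrite /c' /cY /= => /(congr1 (fun x => x - c (Ordinal hk))).
    rewrite addrAC subrr add0r => /eqP; rewrite mulf_eq0 oppr_eq0 (negbTE z00) /=.
    by move/eqP.
  by rewrite nth_default // (leq_trans sq) // ltnW.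
by move/negP: q0; apply; apply/eqP/polyP => k; rewrite coef0 qk.
Qed.
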